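(* Let $L,R$ be nonempty subsets of a group $G$ and $s\in G$. In $2\mathrm{S}(G;L,R)$, if $g=w_{\bar{L},m,a}\,s\,w_{\bar{R},n,b}$ for integers $m,a,n,b\ge0$, then for every $l\in L$ and $r\in R$ we have $g\sim l^ds$ and $g\sim sr^d$, where $d=m+n-(a+b)$.
   Context: For nonempty subsets $L,R$ of a group $G$, the two-sided group digraph $2\mathrm{S}(G;L,R)$ has vertex set $G$ and a directed arc $(g,h)$ if and only if $h=l^{-1}gr$ for some $l\in L$, $r\in R$. Write $\bar{L}=L\cup L^{-1}$, $\bar{R}=R\cup R^{-1}$. The notation $w_{\bar{L},m,a}$ denotes the value of a word (finite product, empty product $=e$) with $m$ factors from $L$ and $a$ factors from $L^{-1}$ in some order; similarly $w_{\bar{R},n,b}$ has $n$ factors from $R$ and $b$ from $R^{-1}$. $g\sim h$ means $g$ is weakly connected to $h$: there is a sequence $g=g_0,\dots,g_n=h$ with, for each $i$, $(g_{i-1},g_i)$ or $(g_i,g_{i-1})$ an arc. *)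

(* Defs.v *)
From Stdlib Require Import ZArith List Relations.
Import ListNotations.

Record Group := {
  carrier :> Type;
  gmul : carrier -> carrier -> carrier;
  ginv : carrier -> carrier;
  gone : carrier;
  gmulA : forall x y z, gmul x (gmul y z) = gmul (gmul x y) z;
  gmul1l : forall x, gmul gone x = x;
  gmulVl : forall x, gmul (ginv x) x = gone
}.

Arguments gmul {G} : rename.
Arguments ginv {G} : rename.
Arguments gone {G} : rename.

Fixpoint npow {G : Group} (g : G) (n : nat) : G :=
  match n with
  | O => gone
  | S k => gmul g (npow g k)
  end.

Definition zpow {G : Group} (g : G) (z : Z) : G :=
  match z with
  | Z0 => gone
  | Zpos p => npow g (Pos.to_nat p)
  | Zneg p => ginv (npow g (Pos.to_nat p))
  end.

Definition arc {G : Group} (L R : G -> Prop) (g h : G) : Prop :=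
  exists l r, L l /\ R r /\ h = gmul (gmul (ginv l) g) r.

Definition wconn {G : Group} (L R : G -> Prop) : G -> G -> Prop :=
  clos_refl_sym_trans G (arc L R).

(* A word over S ∪ S^-1: a list of factors (b, x) with x ∈ S, the factor
   being x if b = true (factor from S) and x^-1 if b = false (factor from S^-1). *)
Definition factor {G : Group} (f : bool * G) : G :=
  if fst f then snd f else ginv (snd f).

Definition word_val {G : Group} (w : list (bool * G)) : G :=
  fold_right (fun f acc => gmul (factor f) acc) gone w.

(* is_word S m a x : x = w_{S̄,m,a} for some word with m factors from S and
   a factors from S^-1 *)
Definition is_word {G : Group} (S : G -> Prop) (m a : nat) (x : G) : Prop :=
  exists w : list (bool * G),
    (forall f, In f w -> S (snd f)) /\
    length (filter (fun f => fst f) w) = m /\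
    length (filter (fun f => negb (fst f)) w) = a /\
    x = word_val w.

(* Main.v *)
Require Import Defs.
From Stdlib Require Import ZArith List Relations Lia.
Import ListNotations.

Open Scope Z_scope.
Section Grp.
Variable G : Group.
Implicit Types x y z : G.

Lemma mulrV x : gmul x (ginv x) = gone.
Proof.
  rewrite <- (gmul1l G (gmul x (ginv x))).
  rewrite <- (gmulVl G (ginv x)) at 1.
  rewrite <- gmulA. rewrite (gmulA G (ginv x) x (ginv x)).
  rewrite gmulVl, gmul1l. apply gmulVl.
Qed.

Lemma mulr1 x : gmul x gone = x.
Proof. rewrite <- (gmulVl G x), gmulA, mulrV, gmul1l. reflexivity. Qed.

Lemma invM x y : ginv (gmul x y) = gmul (ginv y) (ginv x).
Proof.
  assert (H : gmul (gmul (ginv y) (ginv x)) (gmul x y) = gone).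
  { rewrite <- !gmulA, (gmulA G (ginv x) x y), gmulVl, gmul1l, gmulVl. reflexivity. }
  rewrite <- (gmul1l G (ginv (gmul x y))), <- H, <- gmulA, mulrV, mulr1. reflexivity.
Qed.

Lemma npow_comm x n : gmul (npow x n) x = gmul x (npow x n).
Proof.
  induction n; simpl. rewrite gmul1l, mulr1; reflexivity.
  rewrite <- gmulA, IHn. reflexivity.
Qed.

Lemma zpow_nat x n : zpow x (Z.of_nat n) = npow x n.
Proof.
  destruct n. reflexivity. simpl. rewrite SuccNat2Pos.id_succ. reflexivity.
Qed.

Lemma zpow_negnat x n : zpow x (- Z.of_nat n) = ginv (npow x n).
Proof.
  destruct n. simpl. rewrite <- (gmul1l G (ginv gone)), mulrV. reflexivity.
  simpl. rewrite SuccNat2Pos.id_succ. reflexivity.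
Qed.

Lemma zpow_succ x c : zpow x (Z.succ c) = gmul x (zpow x c).
Proof.
  destruct (Z_le_gt_dec 0 c) as [H|H].
  - replace c with (Z.of_nat (Z.to_nat c)) by lia.
    rewrite <- Nat2Z.inj_succ, !zpow_nat. reflexivity.
  - destruct (Z.to_nat (- c)) as [|k] eqn:E; [lia|].
    replace c with (- Z.of_nat (S k)) by lia.
    replace (Z.succ (- Z.of_nat (S k))) with (- Z.of_nat k) by lia.
    rewrite !zpow_negnat. simpl. rewrite <- npow_comm, invM, gmulA, mulrV, gmul1l.
    reflexivity.
Qed.

Lemma zpow_pred x c : zpow x (Z.pred c) = gmul (ginv x) (zpow x c).
Proof.
  rewrite <- (Z.succ_pred c) at 2. rewrite zpow_succ, gmulA, gmulVl, gmul1l.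
  reflexivity.
Qed.

Lemma zpow_add x a b : zpow x (a + b) = gmul (zpow x a) (zpow x b).
Proof.
  induction a using Z.peano_ind.
  - simpl. rewrite gmul1l. reflexivity.
  - rewrite Z.add_succ_l, !zpow_succ, IHa, gmulA. reflexivity.
  - rewrite Z.add_pred_l, !zpow_pred, IHa, gmulA. reflexivity.
Qed.

Lemma zpow1 x : zpow x 1 = x.
Proof. simpl. apply mulr1. Qed.
Lemma zpowm1 x : zpow x (-1) = ginv x.
Proof. simpl. rewrite mulr1. reflexivity. Qed.

Variables L R : G -> Prop.

Lemma moveR l r z : L l -> R r -> wconn L R (gmul z r) (gmul l z).
Proof.
  intros Hl Hr. apply rst_sym, rst_step. exists l, r. repeat split; auto.
  rewrite (gmulA G (ginv l) l z), gmulVl, gmul1l. reflexivity.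
Qed.

Lemma moveRinv l r z : L l -> R r -> wconn L R (gmul z (ginv r)) (gmul (ginv l) z).
Proof.
  intros Hl Hr. apply rst_step. exists l, r. repeat split; auto.
  rewrite <- !gmulA, gmulVl, mulr1. reflexivity.
Qed.

Lemma moveL l r z : L l -> R r -> wconn L R (gmul l z) (gmul z r).
Proof.
  intros Hl Hr. apply rst_step. exists l, r. repeat split; auto.
  rewrite (gmulA G (ginv l) l z), gmulVl, gmul1l. reflexivity.
Qed.

Lemma moveLinv l r z : L l -> R r -> wconn L R (gmul (ginv l) z) (gmul z (ginv r)).
Proof.
  intros Hl Hr. apply rst_sym, rst_step. exists l, r. repeat split; auto.
  rewrite <- !gmulA, gmulVl, mulr1. reflexivity.
Qed.

Definition ef (f : bool * G) : Z := if fst f then 1%Z else (-1)%Z.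
Definition esum (w : list (bool * G)) : Z := fold_right (fun f acc => ef f + acc)%Z 0%Z w.

Lemma esum_app w1 w2 : esum (w1 ++ w2) = (esum w1 + esum w2)%Z.
Proof. induction w1; simpl; lia. Qed.

Lemma esum_len w : esum w = (Z.of_nat (length (filter (fun f => fst f) w))
   - Z.of_nat (length (filter (fun f => negb (fst f)) w)))%Z.
Proof. induction w as [|[[] y] w IH]; cbn [filter length fst negb fold_right ef] in *; unfold esum in *; cbn [fold_right ef fst] in *; rewrite ?Nat2Z.inj_succ; lia. Qed.

Lemma word_val_app (w1 w2 : list (bool * G)) : word_val (w1 ++ w2) = gmul (word_val w1) (word_val w2).
Proof.
  induction w1; simpl. rewrite gmul1l; reflexivity.
  rewrite IHw1, gmulA. reflexivity.
Qed.

Lemma factor_zpow f : factor f = zpow (snd f) (ef f).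
Proof. destruct f as [[] y]; unfold factor, ef; simpl. rewrite mulr1; reflexivity.
  rewrite mulr1; reflexivity. Qed.

Lemma lemA r (Hr : R r) : forall w, (forall f, In f w -> L (snd f)) ->
  forall z, wconn L R (gmul (word_val w) z) (gmul z (zpow r (esum w))).
Proof.
  induction w as [|f w IH]; intros Hw z; simpl.
  - rewrite gmul1l, mulr1. apply rst_refl.
  - eapply rst_trans.
    2:{ rewrite zpow_add, gmulA. apply IH. intros; apply Hw; simpl; auto. }
    rewrite <- gmulA. destruct f as [[] y]; unfold factor, ef; cbn [fst snd].
    + rewrite zpow1, (gmulA G (word_val w) z). apply (moveL y r); auto. apply (Hw (true, y)); simpl; auto.
    + rewrite zpowm1, (gmulA G (word_val w) z). apply (moveLinv y r); auto. apply (Hw (false, y)); simpl; auto.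
Qed.

Lemma lemB l (Hl : L l) : forall w, (forall f, In f w -> R (snd f)) ->
  forall z, wconn L R (gmul z (word_val w)) (gmul (zpow l (esum w)) z).
Proof.
  induction w as [|f w IH] using rev_ind; intros Hw z; simpl.
  - rewrite gmul1l, mulr1. apply rst_refl.
  - rewrite word_val_app, esum_app. simpl. rewrite mulr1, Z.add_0_r.
    eapply rst_trans.
    2:{ rewrite zpow_add, <- gmulA. apply IH.
        intros; apply Hw; apply in_or_app; auto. }
    rewrite gmulA. assert (Hf : R (snd f)) by (apply Hw; apply in_or_app; simpl; auto).
    destruct f as [[] y]; unfold factor, ef; cbn [fst snd] in *.
    + rewrite zpow1, <- (gmulA G l z). apply (moveR l y); auto.
    + rewrite zpowm1, <- (gmulA G (ginv l) z). apply (moveRinv l y); auto.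
Qed.

Lemma lemC l r (Hl : L l) (Hr : R r) : forall c z,
  wconn L R (gmul z (zpow r c)) (gmul (zpow l c) z).
Proof.
  intro c. induction c using Z.peano_ind; intro z.
  - simpl. rewrite gmul1l, mulr1. apply rst_refl.
  - rewrite <- Z.add_1_r, !zpow_add, !zpow1, gmulA.
    eapply rst_trans. apply moveR; eauto.
    rewrite (gmulA G l z). eapply rst_trans. apply IHc. rewrite gmulA. apply rst_refl.
  - replace (Z.pred c) with (c + -1) by lia. rewrite !zpow_add, !zpowm1, gmulA.
    eapply rst_trans. apply moveRinv; eauto.
    rewrite (gmulA G (ginv l) z). eapply rst_trans. apply IHc. rewrite gmulA. apply rst_refl.
Qed.

End Grp.
Close Scope Z_scope.

Theorem mainTheorem14 (G : Group) (L R : G -> Prop)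
  (HL : exists l, L l) (HR : exists r, R r) (s g : G) (m a n b : nat)
  (u v : G) (Hu : is_word L m a u) (Hv : is_word R n b v)
  (Hg : g = gmul (gmul u s) v) :
  let d := (Z.of_nat m + Z.of_nat n - (Z.of_nat a + Z.of_nat b))%Z in
  forall l r, L l -> R r ->
    wconn L R g (gmul (zpow l d) s) /\ wconn L R g (gmul s (zpow r d)).
Proof.
  intros d l r Hl Hr.
  destruct Hu as [wu [Hwu [Hm [Ha Hu]]]].
  destruct Hv as [wv [Hwv [Hn [Hb Hv]]]].
  assert (Eu : esum G wu = (Z.of_nat m - Z.of_nat a)%Z) by (rewrite esum_len; lia).
  assert (Ev : esum G wv = (Z.of_nat n - Z.of_nat b)%Z) by (rewrite esum_len; lia).
  subst g u v. split.
  - rewrite <- gmulA. eapply rst_trans. apply (lemA G L R r Hr); auto.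
    eapply rst_trans. apply (lemC G L R l r Hl Hr).
    rewrite (gmulA G (zpow l _) s). eapply rst_trans. apply (lemB G L R l Hl); auto.
    rewrite gmulA, <- zpow_add. unfold d. rewrite Eu, Ev.
    replace (Z.of_nat n - Z.of_nat b + (Z.of_nat m - Z.of_nat a))%Z
      with (Z.of_nat m + Z.of_nat n - (Z.of_nat a + Z.of_nat b))%Z by lia.
    apply rst_refl.
  - eapply rst_trans. apply (lemB G L R l Hl); auto.
    eapply rst_trans. apply rst_sym. apply (lemC G L R l r Hl Hr).
    rewrite <- gmulA. eapply rst_trans. apply (lemA G L R r Hr); auto.
    rewrite <- gmulA, <- zpow_add. unfold d. rewrite Eu, Ev.
    replace (Z.of_nat n - Z.of_nat b + (Z.of_nat m - Z.of_nat a))%Z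
      with (Z.of_nat m + Z.of_nat n - (Z.of_nat a + Z.of_nat b))%Z by lia.
    apply rst_refl.
Qed.
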